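(* Fix $\varepsilon\in\{1,-1\}$ and $m\in\mathbb{R}$. The momentum map $\Phi : Y\to\mathfrak{sl}(2,\mathbb{C})$, $\Phi(A;h,h_1,h_2)=A\,U(h,h_1,h_2)\,A^{-1}$, is constant along every integral curve of the Euler--Lagrange system $(\mathcal{J},\omega)$.
   Context: For $(h,h_1,h_2)\in\mathbb{R}^3$ put \[ U(h,h_1,h_2)=\begin{pmatrix} i h_1 & 2i\varepsilon\left(h-\varepsilon\left(\frac{m}{3}+i\right)\right)\\[2pt] 2\left(h+\frac{2\varepsilon m}{3}\right)-i\varepsilon\left(h_2-4h^2+\frac{2\varepsilon m h}{3}+\frac{2m^2}{9}-2\right) & -ih_1\end{pmatrix}. \] The momentum space is $Y=\mathrm{SL}(2,\mathbb{C})\times\mathbb{R}^3$ with coordinates $(A;h,h_1,h_2)$. Write the Maurer--Cartan form of $\mathrm{SL}(2,\mathbb{C})$ (pulled back to $Y$) as $A^{-1}dA=\alpha+i\beta$ with $\alpha=\begin{pmatrix}\alpha^1_1&\alpha^1_2\\ \alpha^2_1&-\alpha^1_1\end{pmatrix}$, $\beta=\begin{pmatrix}\beta^1_1&\beta^1_2\\ \beta^2_1&-\beta^1_1\end{pmatrix}$ real-valued. Let $\omega=\beta^2_1$. The Euler--Lagrange system $(\mathcal{J},\omega)$ is the Pfaffian system on $Y$ generated by the 1-forms $\beta^1_1$, $\beta^1_2$, $\alpha^1_1$, $\alpha^1_2-\varepsilon\omega$, $\alpha^2_1-(2\varepsilon h+\frac{m}{3})\omega$, $dh-h_1\omega$,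 $dh_1-h_2\omega$, $dh_2-12hh_1\omega$, with independence condition $\omega\neq0$. An integral curve is a smooth curve $y:I\to Y$ on an interval $I$ on which all these generators pull back to zero and $y^\ast\omega$ vanishes nowhere. *)

(* Defs.v *)
From Stdlib Require Import Reals.
From Coquelicot Require Import Coquelicot.

Open Scope R_scope.

Record M2 := mkM2 { e11 : C; e12 : C; e21 : C; e22 : C }.

Definition M2mul (A B : M2) : M2 :=
  mkM2 (Cplus (Cmult (e11 A) (e11 B)) (Cmult (e12 A) (e21 B)))
       (Cplus (Cmult (e11 A) (e12 B)) (Cmult (e12 A) (e22 B)))
       (Cplus (Cmult (e21 A) (e11 B)) (Cmult (e22 A) (e21 B)))
       (Cplus (Cmult (e21 A) (e12 B)) (Cmult (e22 A) (e22 B))).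

Definition M2det (A : M2) : C :=
  Cminus (Cmult (e11 A) (e22 A)) (Cmult (e12 A) (e21 A)).

Definition M2inv (A : M2) : M2 :=
  let d := Cinv (M2det A) in
  mkM2 (Cmult d (e22 A)) (Cmult d (Copp (e12 A)))
       (Cmult d (Copp (e21 A))) (Cmult d (e11 A)).

Definition Umat (eps m h h1 h2 : R) : M2 :=
  mkM2 (Cmult Ci (RtoC h1))
       (Cmult (Cmult (RtoC 2) (Cmult Ci (RtoC eps)))
              (Cminus (RtoC h) (Cmult (RtoC eps) (Cplus (RtoC (m / 3)) Ci))))
       (Cminus (RtoC (2 * (h + 2 * eps * m / 3)))
               (Cmult (Cmult Ci (RtoC eps))
                      (RtoC (h2 - 4 * h ^ 2 + 2 * eps * m * h / 3
                             + 2 * m ^ 2 / 9 - 2))))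
       (Copp (Cmult Ci (RtoC h1))).

Definition Phi (eps m : R) (A : M2) (h h1 h2 : R) : M2 :=
  M2mul (M2mul A (Umat eps m h h1 h2)) (M2inv A).

Definition in_I (a b : Rbar) (t : R) : Prop := Rbar_lt a t /\ Rbar_lt t b.

Definition smooth_on (a b : Rbar) (f : R -> R) : Prop :=
  forall (n : nat) (t : R), in_I a b t -> ex_derive (Derive_n f n) t.

Definition smooth_M2_on (a b : Rbar) (A : R -> M2) : Prop :=
  smooth_on a b (fun t => fst (e11 (A t))) /\ smooth_on a b (fun t => snd (e11 (A t))) /\
  smooth_on a b (fun t => fst (e12 (A t))) /\ smooth_on a b (fun t => snd (e12 (A t))) /\
  smooth_on a b (fun t => fst (e21 (A t))) /\ smooth_on a b (fun t => snd (e21 (A t))) /\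
  smooth_on a b (fun t => fst (e22 (A t))) /\ smooth_on a b (fun t => snd (e22 (A t))).

Definition DeriveC (f : R -> C) (t : R) : C :=
  (Derive (fun s => fst (f s)) t, Derive (fun s => snd (f s)) t).

Definition DeriveM2 (A : R -> M2) (t : R) : M2 :=
  mkM2 (DeriveC (fun s => e11 (A s)) t) (DeriveC (fun s => e12 (A s)) t)
       (DeriveC (fun s => e21 (A s)) t) (DeriveC (fun s => e22 (A s)) t).

(** Pullback of the Maurer-Cartan form A^{-1} dA along the curve,
    evaluated on d/dt:  A(t)^{-1} A'(t) = alpha + i beta. *)
Definition MC (A : R -> M2) (t : R) : M2 := M2mul (M2inv (A t)) (DeriveM2 A t).

(** Integral curve of the Euler-Lagrange system (J, omega) on the interval (a,b),
    y(t) = (A t; h t, h1 t, h2 t), with omega = beta^2_1. *)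
Definition integral_curve (eps m : R) (a b : Rbar)
    (A : R -> M2) (h h1 h2 : R -> R) : Prop :=
  smooth_M2_on a b A /\ smooth_on a b h /\ smooth_on a b h1 /\ smooth_on a b h2 /\
  forall t, in_I a b t ->
    let W := MC A t in
    let alpha11 := fst (e11 W) in let beta11 := snd (e11 W) in
    let alpha12 := fst (e12 W) in let beta12 := snd (e12 W) in
    let alpha21 := fst (e21 W) in let omega := snd (e21 W) in
    M2det (A t) = RtoC 1 /\
    beta11 = 0 /\
    beta12 = 0 /\
    alpha11 = 0 /\
    alpha12 - eps * omega = 0 /\
    alpha21 - (2 * eps * h t + m / 3) * omega = 0 /\
    Derive h t - h1 t * omega = 0 /\
    Derive h1 t - h2 t * omega = 0 /\
    Derive h2 t - 12 * h t * h1 t * omega = 0 /\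
    omega <> 0.

(* Main.v *)
Require Import Defs.
From Stdlib Require Import Reals Lra Nsatz.
From Coquelicot Require Import Coquelicot.

Definition adjM (X:M2) := mkM2 (e22 X) (Copp (e12 X)) (Copp (e21 X)) (e11 X).
Definition PhiP eps m X h h1 h2 := M2mul (M2mul X (Umat eps m h h1 h2)) (adjM X).
Ltac dtac Heps := cbn [PhiP M2mul adjM Umat Cmult Cplus Cminus Copp RtoC Ci fst snd e11 e12 e21 e22];
  auto_derive; [repeat split; assumption | ];
  repeat match goal with |- context [Derive (fun x => ?f x) ?t] => change (Derive (fun x => f x) t) with (Derive f t) end;
  repeat match goal with H : Derive _ _ = _ |- _ => rewrite H; clear H end;
  match goal with |- ?a = ?b => change (@eq R a b) end;
  destruct Heps; subst; field.
Lemma deriv_zero eps m (Heps : eps = 1 \/ eps = -1) (f1 g1 f2 g2 f3 g3 f4 g4 h h1 h2 : R -> R) t w :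
  ex_derive f1 t -> ex_derive g1 t -> 
  ex_derive f2 t -> ex_derive g2 t -> 
  ex_derive f3 t -> ex_derive g3 t -> 
  ex_derive f4 t -> ex_derive g4 t -> 
  ex_derive h t -> ex_derive h1 t -> ex_derive h2 t ->
  Derive f1 t = f2 t * ((2*eps*h t + m/3)*w) - g2 t * w ->
  Derive g1 t = f2 t * w + g2 t * ((2*eps*h t + m/3)*w) ->
  Derive f3 t = f4 t * ((2*eps*h t + m/3)*w) - g4 t * w ->
  Derive g3 t = f4 t * w + g4 t * ((2*eps*h t + m/3)*w) ->
  Derive f2 t = f1 t * (eps * w) ->
  Derive g2 t = g1 t * (eps * w) ->
  Derive f4 t = f3 t * (eps * w) ->
  Derive g4 t = g3 t * (eps * w) ->
  Derive h t = h1 t * w -> Derive h1 t = h2 t * w -> Derive h2 t = 12 * h t * h1 t * w ->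
  let F := fun s => PhiP eps m (mkM2 (f1 s, g1 s) (f2 s, g2 s) (f3 s, g3 s) (f4 s, g4 s)) (h s) (h1 s) (h2 s) in
  is_derive (fun s => fst (e11 (F s))) t 0 /\ is_derive (fun s => snd (e11 (F s))) t 0 /\
  is_derive (fun s => fst (e12 (F s))) t 0 /\ is_derive (fun s => snd (e12 (F s))) t 0 /\
  is_derive (fun s => fst (e21 (F s))) t 0 /\ is_derive (fun s => snd (e21 (F s))) t 0 /\
  is_derive (fun s => fst (e22 (F s))) t 0 /\ is_derive (fun s => snd (e22 (F s))) t 0.
Proof.
intros. unfold F. clear F. do 7 (split; [dtac Heps|]); dtac Heps.
Qed.
Lemma alg (x1 y1 x2 y2 x3 y3 x4 y4 d1 k1 d2 k2 d3 k3 d4 k4 a c d : R) :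
  let X := mkM2 (x1,y1) (x2,y2) (x3,y3) (x4,y4) in
  let Dm := mkM2 (d1,k1) (d2,k2) (d3,k3) (d4,k4) in
  let W := M2mul (adjM X) Dm in
  M2det X = RtoC 1 ->
  fst (e11 W) = 0 -> snd (e11 W) = 0 -> fst (e12 W) = a -> snd (e12 W) = 0 ->
  fst (e21 W) = c -> snd (e21 W) = d -> fst (e22 W) = 0 -> snd (e22 W) = 0 ->
  Dm = M2mul X (mkM2 (0,0) (a,0) (c,d) (0,0)).
Proof.
  intros X Dm W Hdet. unfold W, X, Dm in *.
  unfold M2det, M2mul, adjM, Cmult, Cplus, Cminus, Copp, RtoC in *; cbn [fst snd e11 e12 e21 e22] in *.
  injection Hdet; intros Hi Hr.
  intros H1 H2 H3 H4 H5 H6 H7 H8.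
  f_equal; f_equal; nsatz.
Qed.

Lemma det_deriv (f1 g1 f2 g2 f3 g3 f4 g4 : R -> R) t :
  ex_derive f1 t -> ex_derive g1 t -> ex_derive f2 t -> ex_derive g2 t ->
  ex_derive f3 t -> ex_derive g3 t -> ex_derive f4 t -> ex_derive g4 t ->
  let W := M2mul (adjM (mkM2 (f1 t, g1 t) (f2 t, g2 t) (f3 t, g3 t) (f4 t, g4 t)))
                 (mkM2 (Derive f1 t, Derive g1 t) (Derive f2 t, Derive g2 t)
                       (Derive f3 t, Derive g3 t) (Derive f4 t, Derive g4 t)) in
  is_derive (fun s => fst (M2det (mkM2 (f1 s, g1 s) (f2 s, g2 s) (f3 s, g3 s) (f4 s, g4 s)))) t
     (fst (e11 W) + fst (e22 W)) /\
  is_derive (fun s => snd (M2det (mkM2 (f1 s, g1 s) (f2 s, g2 s) (f3 s, g3 s) (f4 s, g4 s)))) t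
     (snd (e11 W) + snd (e22 W)).
Proof.
  intros. unfold W. cbn [M2det M2mul adjM Cmult Cplus Cminus Copp RtoC fst snd e11 e12 e21 e22].
  split; auto_derive; [repeat split; assumption | |repeat split; assumption | ];
  repeat match goal with |- context [Derive (fun x => ?f x) ?t] => change (Derive (fun x => f x) t) with (Derive f t) end;
  match goal with |- ?a = ?b => change (@eq R a b) end; ring.
Qed.

Lemma in_I_between a b s t x : in_I a b s -> in_I a b t -> Rmin s t <= x <= Rmax s t -> in_I a b x.
Proof.
  intros [Hs1 Hs2] [Ht1 Ht2] [H1 H2]. split.
  - destruct a as [r| |]; simpl in *; auto.
    apply Rlt_le_trans with (Rmin s t); auto. apply Rmin_glb_lt; auto.
  - destruct b as [r| |]; simpl in *; auto.
    apply Rle_lt_trans with (Rmax s t); auto. apply Rmax_lub_lt; auto.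
Qed.

Lemma const_on a b (g : R -> R) : (forall x, in_I a b x -> is_derive g x 0) ->
  forall s t, in_I a b s -> in_I a b t -> g s = g t.
Proof.
  intros Hd s t Hs Ht.
  destruct (MVT_gen g s t (fun _ => 0)) as [c [_ Hc]].
  - intros x [H1 H2]. apply Hd. apply (in_I_between a b s t); auto. split; lra.
  - intros x [H1 H2]. apply continuity_pt_filterlim. apply (@ex_derive_continuous R_AbsRing R_NormedModule g x).
    exists 0. apply Hd. apply (in_I_between a b s t); auto.
  - lra.
Qed.

Lemma M2ext (X Y : M2) :
  fst (e11 X) = fst (e11 Y) -> snd (e11 X) = snd (e11 Y) ->
  fst (e12 X) = fst (e12 Y) -> snd (e12 X) = snd (e12 Y) ->
  fst (e21 X) = fst (e21 Y) -> snd (e21 X) = snd (e21 Y) ->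
  fst (e22 X) = fst (e22 Y) -> snd (e22 X) = snd (e22 Y) -> X = Y.
Proof.
  destruct X as [[? ?] [? ?] [? ?] [? ?]], Y as [[? ?] [? ?] [? ?] [? ?]]; simpl.
  intros; subst; reflexivity.
Qed.

Lemma Aeta (X : M2) : X = mkM2 (fst (e11 X), snd (e11 X)) (fst (e12 X), snd (e12 X))
  (fst (e21 X), snd (e21 X)) (fst (e22 X), snd (e22 X)).
Proof. destruct X as [[? ?] [? ?] [? ?] [? ?]]; reflexivity. Qed.

Lemma inv_adj (X : M2) : M2det X = RtoC 1 -> M2inv X = adjM X.
Proof.
  intros H. unfold M2inv. rewrite H.
  replace (Cinv (RtoC 1)) with (RtoC 1).
  - unfold adjM. now rewrite !Cmult_1_l.
  - unfold Cinv, RtoC. simpl. apply injective_projections; simpl; field.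
Qed.

Lemma core eps m (Heps : eps = 1 \/ eps = -1) a b (f1 g1 f2 g2 f3 g3 f4 g4 h h1 h2 : R -> R) :
  (forall x, in_I a b x ->
    ex_derive f1 x /\ ex_derive g1 x /\ ex_derive f2 x /\ ex_derive g2 x /\
    ex_derive f3 x /\ ex_derive g3 x /\ ex_derive f4 x /\ ex_derive g4 x /\
    ex_derive h x /\ ex_derive h1 x /\ ex_derive h2 x) ->
  (forall x, in_I a b x ->
    let W := M2mul (adjM (mkM2 (f1 x, g1 x) (f2 x, g2 x) (f3 x, g3 x) (f4 x, g4 x)))
                 (mkM2 (Derive f1 x, Derive g1 x) (Derive f2 x, Derive g2 x)
                       (Derive f3 x, Derive g3 x) (Derive f4 x, Derive g4 x)) in
    let w := snd (e21 W) in
    M2det (mkM2 (f1 x, g1 x) (f2 x, g2 x) (f3 x, g3 x) (f4 x, g4 x)) = RtoC 1 /\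
    snd (e11 W) = 0 /\ snd (e12 W) = 0 /\ fst (e11 W) = 0 /\
    fst (e12 W) - eps * w = 0 /\ fst (e21 W) - (2 * eps * h x + m / 3) * w = 0 /\
    Derive h x - h1 x * w = 0 /\ Derive h1 x - h2 x * w = 0 /\
    Derive h2 x - 12 * h x * h1 x * w = 0) ->
  forall s t, in_I a b s -> in_I a b t ->
    PhiP eps m (mkM2 (f1 s, g1 s) (f2 s, g2 s) (f3 s, g3 s) (f4 s, g4 s)) (h s) (h1 s) (h2 s) =
    PhiP eps m (mkM2 (f1 t, g1 t) (f2 t, g2 t) (f3 t, g3 t) (f4 t, g4 t)) (h t) (h1 t) (h2 t).
Proof.
  intros HE HC.
  assert (HD : forall x, in_I a b x ->
    let F := fun s => PhiP eps m (mkM2 (f1 s, g1 s) (f2 s, g2 s) (f3 s, g3 s) (f4 s, g4 s)) (h s) (h1 s) (h2 s) in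
  is_derive (fun s => fst (e11 (F s))) x 0 /\ is_derive (fun s => snd (e11 (F s))) x 0 /\
  is_derive (fun s => fst (e12 (F s))) x 0 /\ is_derive (fun s => snd (e12 (F s))) x 0 /\
  is_derive (fun s => fst (e21 (F s))) x 0 /\ is_derive (fun s => snd (e21 (F s))) x 0 /\
  is_derive (fun s => fst (e22 (F s))) x 0 /\ is_derive (fun s => snd (e22 (F s))) x 0).
  { intros x Hx.
    destruct (HE x Hx) as (E1 & E2 & E3 & E4 & E5 & E6 & E7 & E8 & E9 & E10 & E11).
    destruct (HC x Hx) as (Hdet & B11 & B12 & A11 & A12 & A21 & Dh & Dh1 & Dh2).
    set (W := M2mul (adjM (mkM2 (f1 x, g1 x) (f2 x, g2 x) (f3 x, g3 x) (f4 x, g4 x)))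
                 (mkM2 (Derive f1 x, Derive g1 x) (Derive f2 x, Derive g2 x)
                       (Derive f3 x, Derive g3 x) (Derive f4 x, Derive g4 x))) in *.
    set (w := snd (e21 W)) in *.
    destruct (det_deriv f1 g1 f2 g2 f3 g3 f4 g4 x E1 E2 E3 E4 E5 E6 E7 E8) as [Dr Di].
    fold W in Dr, Di.
    assert (Hloc : locally x (in_I a b)).
    { exact (@open_and R_UniformSpace (fun u : R => Rbar_lt a u) (fun u : R => Rbar_lt u b)
        (open_Rbar_gt a) (open_Rbar_lt b) x Hx). }
    assert (Zr : fst (e22 W) = 0).
    { apply is_derive_unique in Dr.
      rewrite (Derive_ext_loc _ (fun _ => 1)) in Dr.
      - rewrite Derive_const in Dr. lra.
      - apply (filter_imp (in_I a b)); auto. intros y Hy.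
        destruct (HC y Hy) as [Hd _]. rewrite Hd. reflexivity. }
    assert (Zi : snd (e22 W) = 0).
    { apply is_derive_unique in Di.
      rewrite (Derive_ext_loc _ (fun _ => 0)) in Di.
      - rewrite Derive_const in Di. lra.
      - apply (filter_imp (in_I a b)); auto. intros y Hy.
        destruct (HC y Hy) as [Hd _]. rewrite Hd. reflexivity. }
    pose proof (alg (f1 x) (g1 x) (f2 x) (g2 x) (f3 x) (g3 x) (f4 x) (g4 x)
      (Derive f1 x) (Derive g1 x) (Derive f2 x) (Derive g2 x)
      (Derive f3 x) (Derive g3 x) (Derive f4 x) (Derive g4 x)
      (eps * w) ((2 * eps * h x + m / 3) * w) w Hdet A11 B11 ltac:(fold W; lra) B12
      ltac:(fold W; lra) eq_refl Zr Zi) as E.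
    cbn [M2mul Cmult Cplus fst snd e11 e12 e21 e22] in E.
    injection E; intros.
    apply (deriv_zero eps m Heps f1 g1 f2 g2 f3 g3 f4 g4 h h1 h2 x w); auto;
      try (match goal with |- Derive ?f _ = _ =>
             match goal with H : Derive f _ = _ |- _ => rewrite H; ring end end);
      lra. }
  intros s t Hs Ht.
  apply M2ext;
   [ apply (const_on a b (fun s => fst (e11 (PhiP eps m (mkM2 (f1 s, g1 s) (f2 s, g2 s) (f3 s, g3 s) (f4 s, g4 s)) (h s) (h1 s) (h2 s)))))
   | apply (const_on a b (fun s => snd (e11 (PhiP eps m (mkM2 (f1 s, g1 s) (f2 s, g2 s) (f3 s, g3 s) (f4 s, g4 s)) (h s) (h1 s) (h2 s)))))
   | apply (const_on a b (fun s => fst (e12 (PhiP eps m (mkM2 (f1 s, g1 s) (f2 s, g2 s) (f3 s, g3 s) (f4 s, g4 s)) (h s) (h1 s) (h2 s)))))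
   | apply (const_on a b (fun s => snd (e12 (PhiP eps m (mkM2 (f1 s, g1 s) (f2 s, g2 s) (f3 s, g3 s) (f4 s, g4 s)) (h s) (h1 s) (h2 s)))))
   | apply (const_on a b (fun s => fst (e21 (PhiP eps m (mkM2 (f1 s, g1 s) (f2 s, g2 s) (f3 s, g3 s) (f4 s, g4 s)) (h s) (h1 s) (h2 s)))))
   | apply (const_on a b (fun s => snd (e21 (PhiP eps m (mkM2 (f1 s, g1 s) (f2 s, g2 s) (f3 s, g3 s) (f4 s, g4 s)) (h s) (h1 s) (h2 s)))))
   | apply (const_on a b (fun s => fst (e22 (PhiP eps m (mkM2 (f1 s, g1 s) (f2 s, g2 s) (f3 s, g3 s) (f4 s, g4 s)) (h s) (h1 s) (h2 s)))))
   | apply (const_on a b (fun s => snd (e22 (PhiP eps m (mkM2 (f1 s, g1 s) (f2 s, g2 s) (f3 s, g3 s) (f4 s, g4 s)) (h s) (h1 s) (h2 s))))) ];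
  auto; intros x Hx; apply HD; auto.
Qed.

Theorem corollary3p4 (eps m : R) (Heps : eps = 1 \/ eps = -1)
    (a b : Rbar) (Hab : Rbar_lt a b)
    (A : R -> M2) (h h1 h2 : R -> R) :
  integral_curve eps m a b A h h1 h2 ->
  forall s t, in_I a b s -> in_I a b t ->
    Phi eps m (A s) (h s) (h1 s) (h2 s) = Phi eps m (A t) (h t) (h1 t) (h2 t).
Proof.
  intros [[S1 [S2 [S3 [S4 [S5 [S6 [S7 S8]]]]]]] [Sh [Sh1 [Sh2 H]]]] s t Hs Ht.
  assert (HP : forall x, in_I a b x -> Phi eps m (A x) (h x) (h1 x) (h2 x) =
     PhiP eps m (mkM2 (fst (e11 (A x)), snd (e11 (A x))) (fst (e12 (A x)), snd (e12 (A x)))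
       (fst (e21 (A x)), snd (e21 (A x))) (fst (e22 (A x)), snd (e22 (A x)))) (h x) (h1 x) (h2 x)).
  { intros x Hx. destruct (H x Hx) as [Hd _]. unfold Phi, PhiP.
    rewrite inv_adj by exact Hd. rewrite <- Aeta. reflexivity. }
  rewrite (HP s Hs), (HP t Ht).
  apply (core eps m Heps a b (fun s => fst (e11 (A s))) (fun s => snd (e11 (A s)))
    (fun s => fst (e12 (A s))) (fun s => snd (e12 (A s)))
    (fun s => fst (e21 (A s))) (fun s => snd (e21 (A s)))
    (fun s => fst (e22 (A s))) (fun s => snd (e22 (A s))) h h1 h2); auto.
  - intros x Hx.
    repeat split;
      [ exact (S1 0%nat x Hx) | exact (S2 0%nat x Hx) | exact (S3 0%nat x Hx) | exact (S4 0%nat x Hx)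
      | exact (S5 0%nat x Hx) | exact (S6 0%nat x Hx) | exact (S7 0%nat x Hx) | exact (S8 0%nat x Hx)
      | exact (Sh 0%nat x Hx) | exact (Sh1 0%nat x Hx) | exact (Sh2 0%nat x Hx) ].
  - intros x Hx. destruct (H x Hx) as (Hd & B11 & B12 & A11 & A12 & A21 & Dh & Dh1 & Dh2 & _).
    assert (HW : MC A x = M2mul (adjM (mkM2 (fst (e11 (A x)), snd (e11 (A x))) (fst (e12 (A x)), snd (e12 (A x)))
       (fst (e21 (A x)), snd (e21 (A x))) (fst (e22 (A x)), snd (e22 (A x))))) (DeriveM2 A x)).
    { unfold MC. rewrite inv_adj by exact Hd. rewrite <- Aeta. reflexivity. }
    rewrite HW in B11, B12, A11, A12, A21, Dh, Dh1, Dh2.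
    cbv zeta. cbv beta.
    split; [rewrite <- Aeta; exact Hd|].
    repeat split; assumption.
Qed.
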